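(* For every integer $r\ge 0$, there do not exist $x,y,z,w\in\mathbb{N}=\{0,1,2,\dots\}$ such that $$x^2+y^2+z^2+w^2=4^{2r+1}\cdot 6\quad\text{and}\quad 3x+10y\in\mathcal{S}.$$
   Context: $\mathcal{S}=\{x^2: x\in\mathbb{Z}\}$ denotes the set of integer squares. (Note that $(a,b)=(3,10)$ satisfies $\gcd(a,b)=1$ and $a^2+b^2=109$ is prime, so this shows that the hypothesis $\operatorname{ord}_2(n)\le C$ cannot be dropped from the statement that sufficiently large $n$ admit such a representation.) *)

(* Defs.v *)
From mathcomp Require Import all_boot.
(* The set S = { x^2 : x in Z } of integer squares, restricted to naturals:
   a natural number n is in S iff n = k^2 for some integer k, equivalently
   for some natural k (take k = |integer witness|). *)
Definition is_square (n : nat) : Prop := exists k : nat, n = k ^ 2.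

(* Main.v *)
Require Import Defs.
From mathcomp Require Import all_boot.
From mathcomp Require Import zify.

Lemma dec4 (x : nat) : exists q r, x = 4*q + r /\ r < 4 /\ x^2 = 8*(2*q*q + q*r) + r*r.
Proof.
exists (x %/ 4), (x %% 4).
have h : x = 4 * (x %/ 4) + x %% 4 by lia.
have l : x %% 4 < 4 by lia.
move: h l; set q := x %/ 4; set r := x %% 4; clearbody q r => h l.
split; first by [].
split; first by [].
rewrite h; nia.
Qed.

Lemma all_even x y z w t : x^2 + y^2 + z^2 + w^2 = 8 * t ->
  exists a b c d, x = 2*a /\ y = 2*b /\ z = 2*c /\ w = 2*d.
Proof.
move=> H.
have [q1 [r1 [e1 [l1 s1]]]] := dec4 x.
have [q2 [r2 [e2 [l2 s2]]]] := dec4 y.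
have [q3 [r3 [e3 [l3 s3]]]] := dec4 z.
have [q4 [r4 [e4 [l4 s4]]]] := dec4 w.
rewrite s1 s2 s3 s4 in H.
move: H.
set A := 2*q1*q1 + q1*r1. set B := 2*q2*q2 + q2*r2.
set C := 2*q3*q3 + q3*r3. set D := 2*q4*q4 + q4*r4.
clearbody A B C D => H.
have ev : r1 %% 2 = 0 /\ r2 %% 2 = 0 /\ r3 %% 2 = 0 /\ r4 %% 2 = 0.
  clear e1 e2 e3 e4 s1 s2 s3 s4; move: l1 l2 l3 l4 H.
  case: r1 => [|[|[|[|?]]]] //; case: r2 => [|[|[|[|?]]]] //;
  case: r3 => [|[|[|[|?]]]] //; case: r4 => [|[|[|[|?]]]] //; lia.
exists (2*q1 + r1 %/ 2), (2*q2 + r2 %/ 2), (2*q3 + r3 %/ 2), (2*q4 + r4 %/ 2).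
lia.
Qed.

Lemma descent k : forall x y z w, x^2 + y^2 + z^2 + w^2 = 4^k * 6 ->
  exists a b c d, x = 2^k*a /\ y = 2^k*b /\ z = 2^k*c /\ w = 2^k*d /\
    a^2 + b^2 + c^2 + d^2 = 6.
Proof.
elim: k => [|k IH] x y z w H.
  by exists x, y, z, w; rewrite !expn0 !mul1n; rewrite expn0 mul1n in H.
have H8 : x^2 + y^2 + z^2 + w^2 = 8 * (4^k * 3) by rewrite H expnS; move: (4^k) => P; lia.
have [a [b [c [d [ea [eb [ec ed]]]]]]] := all_even _ _ _ _ _ H8.
subst x y z w.
have H' : a^2 + b^2 + c^2 + d^2 = 4^k * 6.
  move: H; rewrite [4 ^ _]expnS !expnMn (_ : 2^2 = 4) //; move: (a^2) (b^2) (c^2) (d^2) (4^k) => A B C D P; lia.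
have [a' [b' [c' [d' [ea [eb [ec [ed e]]]]]]]] := IH _ _ _ _ H'.
by exists a', b', c', d'; rewrite expnS ea eb ec ed !mulnA.
Qed.

Lemma sq_desc r : forall k n, k^2 = 4^r * n -> exists j, k = 2^r * j /\ j^2 = n.
Proof.
elim: r => [|r IH] k n H.
  by exists k; rewrite expn0 mul1n; rewrite expn0 mul1n in H.
have ek : ~~ odd k.
  apply/negP => ok.
  have : odd (k^2) by rewrite oddX ok.
  by rewrite H expnS -mulnA oddM.
have [k' ek'] : exists k', k = 2 * k'.
  by exists k./2; rewrite -[k in LHS]odd_double_half (negbTE ek) add0n -muln2 mulnC.
subst k.
have H' : k'^2 = 4^r * n.
  by move: H; rewrite [4 ^ _]expnS expnMn (_ : 2^2 = 4) //; move: (k'^2) (4^r) => A P; lia.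
have [j [e1 e2]] := IH _ _ H'.
by exists j; rewrite expnS e1 mulnA.
Qed.

Theorem mainTheorem3 (r : nat) :
  ~ (exists x y z w : nat,
        x ^ 2 + y ^ 2 + z ^ 2 + w ^ 2 = 4 ^ (2 * r + 1) * 6 /\
        is_square (3 * x + 10 * y)).
Proof.
move=> [x [y [z [w [H [k Hk]]]]]].
have [a [b [c [d [ea [eb [ec [ed e]]]]]]]] := descent _ _ _ _ _ H.
subst x y z w.
have lt3 : forall t, t^2 <= 6 -> t < 3.
  by move=> t ht; rewrite -(ltn_exp2r _ _ (isT : 0 < 2)); apply: leq_ltn_trans ht _.
have ha : a < 3 by apply: lt3; clear -e; move: e; move: (a^2) (b^2) (c^2) (d^2) => *; lia.
have hb : b < 3 by apply: lt3; clear -e; move: e; move: (a^2) (b^2) (c^2) (d^2) => *; lia.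
have hc : c < 3 by apply: lt3; clear -e; move: e; move: (a^2) (b^2) (c^2) (d^2) => *; lia.
have hd : d < 3 by apply: lt3; clear -e; move: e; move: (a^2) (b^2) (c^2) (d^2) => *; lia.
have Hk' : k^2 = 4^r * (2 * (3*a + 10*b)).
  clear -Hk; rewrite -Hk expnD expnM (_ : 2^2 = 4) // expn1; move: (4^r) => P; lia.
have [j [_ ej]] := sq_desc _ _ _ Hk'.
clear H Hk Hk'.
have hj : j < 8.
  rewrite -(ltn_exp2r _ _ (isT : 0 < 2)) ej.
  by clear -ha hb; move: ha hb; case: a => [|[|[|?]]] //; case: b => [|[|[|?]]].
move: ha hb hc hd hj e ej.
case: a => [|[|[|?]]] //; case: b => [|[|[|?]]] //;
case: c => [|[|[|?]]] //; case: d => [|[|[|?]]] //;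
case: j => [|[|[|[|[|[|[|[|?]]]]]]]] //.
Qed.
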